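(* The independence polynomial $Ind(G;x)$ and the clique polynomial $Cl(G;x)$ are both weakly distinguishing; i.e. almost all graphs $G$ have an $Ind$-mate and almost all graphs $G$ have a $Cl$-mate.
   Context: All graphs are finite and simple. For a graph $G$ and $i\ge 1$, let $c_i(G)$ be the number of vertex subsets $A\subseteq V(G)$ with $G[A]$ isomorphic to the complete graph $K_i$, and $s_i(G)$ the number of $A\subseteq V(G)$ with $G[A]$ edgeless on $i$ vertices. Then $Cl(G;x)=1+\sum_{i\ge1} c_i(G)x^i$ and $Ind(G;x)=1+\sum_{i\ge 1}s_i(G)x^i$. For a graph polynomial $P$ (an isomorphism-invariant map from graphs to polynomials), $H$ is a $P$-mate of $G$ if $P(G)=P(H)$ and $H\not\cong G$; $G$ is $P$-unique if it has no $P$-mate. Let $\mathcal{G}(n)$ be the set of isomorphism classes of graphs on $n$ vertices and $U_P(n)$ the set of $P$-unique graphs in $\mathcal{G}(n)$. $P$ is weakly distinguishing if $\lim_{n\to\infty}|U_P(n)|/|\mathcal{G}(n)|=0$. *)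

(* Defs.v *)
From HB Require Import structures.
From mathcomp Require Import all_boot all_order all_algebra.
From mathcomp Require Import all_classical all_reals all_analysis.

Set Implicit Arguments.
Unset Strict Implicit.
Unset Printing Implicit Defensive.

Import Order.TTheory GRing.Theory Num.Theory numFieldNormedType.Exports.
Local Open Scope ring_scope.

Definition graph (n : nat) := {ffun 'I_n * 'I_n -> bool}.

Definition simple_graph (n : nat) (g : graph n) : bool :=
  [forall i : 'I_n, ~~ g (i, i)] &&
  [forall i : 'I_n, forall j : 'I_n, g (i, j) == g (j, i)].

Definition iso (n m : nat) (g : graph n) (h : graph m) : Prop :=
  exists f : 'I_n -> 'I_m, bijective f /\ forall i j : 'I_n, g (i, j) = h (f i, f j).

Definition clique_count (n : nat) (g : graph n) (i : nat) : nat :=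
  #|[set A : {set 'I_n} | (#|A| == i) &&
      [forall x in A, forall y in A, (x != y) ==> g (x, y)]]|.

Definition indep_count (n : nat) (g : graph n) (i : nat) : nat :=
  #|[set A : {set 'I_n} | (#|A| == i) &&
      [forall x in A, forall y in A, ~~ g (x, y)]]|.

(* For i > n the counts vanish, so summing up to n is the full sum over i >= 1. *)
Definition Cl (n : nat) (g : graph n) : {poly int} :=
  1 + \sum_(1 <= i < n.+1) 'X^i *+ clique_count g i.

Definition Ind (n : nat) (g : graph n) : {poly int} :=
  1 + \sum_(1 <= i < n.+1) 'X^i *+ indep_count g i.

Definition graph_poly := forall n : nat, graph n -> {poly int}.

Definition mate (P : graph_poly) (n m : nat) (g : graph n) (h : graph m) : Prop :=
  simple_graph h /\ P n g = P m h /\ ~ iso g h.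

Definition P_unique (P : graph_poly) (n : nat) (g : graph n) : Prop :=
  forall (m : nat) (h : graph m), ~ mate P g h.

Definition iso_class (n : nat) (g : graph n) : {set graph n} :=
  [set h : graph n | simple_graph h && `[< iso g h >]].

Definition graph_classes (n : nat) : {set {set graph n}} :=
  (@iso_class n) @: [set g : graph n | simple_graph g].

Definition unique_classes (P : graph_poly) (n : nat) : {set {set graph n}} :=
  [set C in graph_classes n | `[< exists g, g \in C /\ P_unique P g >]].

Local Open Scope classical_set_scope.
Definition weakly_distinguishing (R : realType) (P : graph_poly) : Prop :=
  (fun n : nat => (#|unique_classes P n|%:R / #|graph_classes n|%:R : R))
    @ \oo --> 0.

(* Main.v *)
Require Import Defs.
From mathcomp Require Import all_boot all_order all_algebra.
From mathcomp Require Import all_classical all_reals all_analysis.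
From mathcomp Require Import all_fingroup.
From mathcomp Require Import zify.
From mathcomp Require Import fintype finset.

Set Implicit Arguments.
Unset Strict Implicit.
Unset Printing Implicit Defensive.

Lemma e_bound t : 10 <= t -> 64 * t.+1 <= 2 ^ t.
Proof.
elim: t => // t IH; rewrite leq_eqVlt => /orP [/eqP <-|] //.
rewrite ltnS => /IH h; rewrite expnS; lia.
Qed.

Lemma expn_mono m n e : m <= n -> m ^ e <= n ^ e.
Proof. by move=> h; elim: e => // e IH; rewrite !expnS leq_mul. Qed.

Lemma fact_le n : n`! <= n ^ n.
Proof.
elim: n => // n IH; rewrite factS expnS leq_mul //.
by apply: (leq_trans IH); apply: expn_mono. 
Qed.

Lemma arith n u k c : 1024 <= n -> n * n <= 2 * u + n ->
  k = n %/ 4 -> c = (k * k - k) %/ 2 ->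
  (n.+1 * (n`! * ((2 ^ n).+1 ^ k + 2 ^ n * 2 ^ (u - c))) <= 2 ^ u) /\ c <= u.
Proof.
move=> hn hu hk hc; subst k c.
set k := n %/ 4. set c := (k * k - k) %/ 2.
set e := (trunc_log 2 n).+1.
have he : 64 * e <= n.
  have h1 := @trunc_logP 2 n erefl (leq_trans _ hn).
  have [lt|ge] := leqP 10 (trunc_log 2 n).
    by apply: leq_trans (e_bound lt) (h1 _).
  rewrite /e; lia.
have hfact : n`! <= 2 ^ (e * n).
  apply: leq_trans (fact_le n) _; rewrite expnM; apply: expn_mono.
  exact: ltnW (trunc_log_ltn n _).
have hn1 : n.+1 <= 2 ^ n by apply: ltn_expl.
have h2n : (2 ^ n).+1 <= 2 ^ n.+1 by rewrite expnS; have := expn_gt0 2 n; lia.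
have hen : 64 * (e * n) <= n * n by rewrite mulnA leq_mul2r he orbT.
have h4 : 4 * k <= n by rewrite /k; lia.
have hk : 4 * (n * k) <= n * n.
  by rewrite mulnCA leq_mul.
have hk2 : n * n <= 16 * (k * k) + 6 * n + 9.
  have h5 : n <= 4 * k + 3 by rewrite /k; lia.
  have := leq_mul h5 h5. have : 4 * k <= n by rewrite /k; lia. clearbody k. lia.
have hkk : k * k <= n * k by rewrite leq_mul2r leq_div orbT.
have hnn : 1024 * n <= n * n by rewrite leq_mul2r hn orbT.
have hc : c <= u by rewrite /c; clearbody k; lia.
split=> //.
have E1 : n + e * n + n.+1 * k + 1 <= u by clearbody k e; lia.
have E2 : 2 * n + e * n + 1 <= c by rewrite /c; clearbody k e; lia.
have X : 2 * 2 ^ (n + e * n + n.+1 * k) <= 2 ^ u.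
  by rewrite -expnS; apply: leq_pexp2l => //; lia.
have Y : 2 * 2 ^ (n + e * n + (n + (u - c))) <= 2 ^ u.
  by rewrite -expnS; apply: leq_pexp2l => //; lia.
have A1 : (2 ^ n).+1 ^ k <= 2 ^ (n.+1 * k) by rewrite expnM; apply: expn_mono.
have A2 : n.+1 * n`! <= 2 ^ (n + e * n) by rewrite expnD leq_mul.
rewrite mulnA; apply: (leq_trans (leq_mul A2 (leq_add A1 (leqnn _)))).
rewrite -expnD mulnDr -!expnD; lia.
Qed.

Lemma my_card_big_setU (I : Type) (T : finType) (r : seq I) (P : {pred I})
    (F : I -> {set T}) :
  (#|\bigcup_(i <- r | P i)  F i| <= \sum_(i <- r | P i) #|F i|)%N.
Proof.
elim/big_ind2 : _ => // [|m A n B Am Bn]; first by rewrite cards0.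
by rewrite (leq_trans (leq_card_setU _ _))// leq_add.
Qed.

Lemma iso_sym n m (g : graph n) (h : graph m) : iso g h -> iso h g.
Proof.
case=> f [[f' fK f'K] H]; exists f'; split; first by exists f.
by move=> i j; rewrite H !f'K.
Qed.

Lemma iso_trans n m p (g : graph n) (h : graph m) (l : graph p) :
  iso g h -> iso h l -> iso g l.
Proof.
case=> f [bf Hf] [f2 [bf2 Hf2]]; exists (f2 \o f); split; first exact: bij_comp.
by move=> i j; rewrite Hf Hf2.
Qed.

Lemma iso_refl n (g : graph n) : iso g g.
Proof. by exists id; split=> //; exists id. Qed.

Lemma iso_class_eq n (g h : graph n) : iso g h -> iso_class g = iso_class h.
Proof.
move=> gh; apply/setP=> l; rewrite !inE; case: (simple_graph l) => //=.
apply/asboolP/asboolP => H; first exact: iso_trans (iso_sym gh) H.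
exact: iso_trans gh H.
Qed.

Lemma class_mem n (C : {set graph n}) g : C \in graph_classes n -> g \in C ->
  simple_graph g /\ C = iso_class g.
Proof.
case/imsetP=> g0 _ -> ; rewrite inE => /andP [sg /asboolP H].
by split=> //; apply: iso_class_eq.
Qed.

Definition relabel n (g : graph n) (s : 'S_n) : graph n :=
  [ffun p : 'I_n * 'I_n => g ((s^-1)%g p.1, (s^-1)%g p.2)].

Lemma card_class n (g : graph n) : #|iso_class g| <= n`!.
Proof.
have sub : iso_class g \subset [set relabel g s | s : 'S_n].
  apply/subsetP=> h; rewrite inE => /andP [_ /asboolP [f [bf Hf]]].
  apply/imsetP; exists (perm (bij_inj bf)) => //.
  apply/ffunP=> [[a b]]; rewrite ffunE /=.
  rewrite -{1}(permKV (perm (bij_inj bf)) a) -{1}(permKV (perm (bij_inj bf)) b).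
  by rewrite !permE Hf.
apply: leq_trans (subset_leq_card sub) _.
apply: leq_trans (leq_imset_card _ _) _; by rewrite card_Sn.
Qed.

Lemma simple_le_classes n :
  #|[set g : graph n | simple_graph g]| <= n`! * #|graph_classes n|.
Proof.
have sub : [set g : graph n | simple_graph g] \subset \bigcup_(C in graph_classes n) C.
  apply/subsetP=> g; rewrite inE => sg; apply/bigcupP; exists (iso_class g).
    by apply/imsetP; exists g; rewrite ?inE.
  by rewrite inE sg; apply/asboolP; apply: iso_refl.
apply: leq_trans (subset_leq_card sub) _.
apply: leq_trans (my_card_big_setU _ _ _) _.
rewrite mulnC -sum_nat_const; apply: leq_sum => C /imsetP [g0 _ ->].
exact: card_class.
Qed.

Definition UA n (A : {set 'I_n}) : {set 'I_n * 'I_n} :=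
  [set p : 'I_n * 'I_n | [&& (p.1 < p.2)%N, p.1 \in A & p.2 \in A]].
Definition Uall n := UA [set: 'I_n].

Lemma UA_sub n (A : {set 'I_n}) : UA A \subset Uall n.
Proof. by apply/subsetP=> p; rewrite !inE => /and3P [-> _ _]. Qed.

Lemma simple_props n (g : graph n) : simple_graph g ->
  (forall i, g (i, i) = false) /\ (forall i j, g (i, j) = g (j, i)).
Proof.
case/andP=> /forallP H1 /forallP H2; split; first by move=> i; apply/negbTE.
by move=> i j; apply/eqP; move/forallP: (H2 i).
Qed.

Lemma simple_ext n (g1 g2 : graph n) : simple_graph g1 -> simple_graph g2 ->
  (forall p, p \in Uall n -> g1 p = g2 p) -> g1 = g2.
Proof.
move=> /simple_props [d1 s1] /simple_props [d2 s2] H; apply/ffunP=> [[i j]].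
have [lt|gt|eq] := ltngtP i j.
- by apply: H; rewrite !inE lt.
- by rewrite s1 s2; apply: H; rewrite !inE gt.
- have -> : i = j by apply: val_inj; rewrite /= eq.
  by rewrite d1 d2.
Qed.

Definition gE n (E : {set 'I_n * 'I_n}) : graph n :=
  [ffun p => (p \in E) || ((p.2, p.1) \in E)].

Lemma gE_simple n (E : {set 'I_n * 'I_n}) : E \subset Uall n -> simple_graph (gE E).
Proof.
move=> sE; apply/andP; split; apply/forallP=> i.
  rewrite ffunE /= orbb; apply/negP => /(subsetP sE); by rewrite !inE ltnn.
by apply/forallP=> j; rewrite !ffunE /= orbC.
Qed.

Lemma gE_edges n (E : {set 'I_n * 'I_n}) p : E \subset Uall n -> p \in Uall n ->
  gE E p = (p \in E).
Proof.
move=> sE; case: p => i j; rewrite ffunE /= !inE /= !andbT => lt.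
case: ((j, i) \in E) / boolP => [/(subsetP sE)|]; last by rewrite orbF.
by rewrite !inE /= !andbT => lt'; have := ltn_trans lt lt'; rewrite ltnn.
Qed.

Lemma simple_lb n : 2 ^ #|Uall n| <= #|[set g : graph n | simple_graph g]|.
Proof.
rewrite -card_powerset -(@card_in_imset _ _ (@gE n)); last first.
  move=> E1 E2; rewrite !powersetE => s1 s2 eq; apply/setP=> p.
  case pU: (p \in Uall n); first by rewrite -(gE_edges s1 pU) -(gE_edges s2 pU) eq.
  by apply/idP/idP => [/(subsetP s1)|/(subsetP s2)]; rewrite pU.
apply: subset_leq_card; apply/subsetP=> g /imsetP [E sE ->].
by rewrite inE gE_simple // -powersetE.
Qed.

Lemma UA_card n (A : {set 'I_n}) : #|A| * #|A| <= 2 * #|UA A| + #|A|.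
Proof.
have sub : setX A A \subset
    (UA A :|: [set (p.2, p.1) | p in UA A]) :|: [set (x, x) | x in A].
  apply/subsetP=> [[i j]]; rewrite !inE /= => /andP [iA jA].
  have [lt|gt|eq] := ltngtP i j.
  - by rewrite iA jA.
  - apply/orP; left; apply/orP; right; apply/imsetP; exists (j, i) => //.
    by rewrite !inE gt iA jA.
  - apply/orP; right; apply/imsetP; exists i => //.
    by have -> : j = i by apply: val_inj; rewrite /= eq.
rewrite -cardsX; apply: leq_trans (subset_leq_card sub) _.
apply: leq_trans (leq_card_setU _ _) _.
apply: leq_add; last exact: leq_imset_card.
apply: leq_trans (leq_card_setU _ _) _.
by rewrite mul2n -addnn leq_add // leq_imset_card.
Qed.

Definition okT := forall n, graph n -> {set 'I_n} -> bool.
Definition cnt (ok : okT) n (g : graph n) i :=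
  #|[set A : {set 'I_n} | (#|A| == i) && ok n g A]|.
Definition Pok (ok : okT) : graph_poly :=
  fun n g => (1 + \sum_(1 <= i < n.+1) 'X^i *+ cnt ok g i)%R.

Lemma card_sets n : #|{set 'I_n}| = 2 ^ n.
Proof. by rewrite -cardsT -powersetT card_powerset cardsT card_ord. Qed.

Lemma sub_card T (A : {set T}) k : k <= #|A| -> exists2 B : {set T}, B \subset A & #|B| = k.
Proof.
move=> h; have [m hm] : exists m, #|A| = k + m by exists (#|A| - k); lia.
elim: m A hm {h} => [|m IH] A hm; first by exists A; rewrite ?hm ?addn0.
have /card_gt0P [x xA] : 0 < #|A| by lia.
have [|B sB cB] := IH (A :\ x); first by rewrite (cardsD1 x A) xA in hm; lia.
by exists B => //; apply: subset_trans sB (subsetDl A [set x]).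
Qed.

Lemma bad_A (ok : okT) b
  (Hloc : forall n (g : graph n) A p, simple_graph g -> ok n g A -> p \in UA A -> g p = b)
  n (A : {set 'I_n}) :
  #|[set g : graph n | simple_graph g && ok n g A]| <= 2 ^ (#|Uall n| - #|UA A|).
Proof.
set D := Uall n :\: UA A.
have cD : #|D| = #|Uall n| - #|UA A|.
  by rewrite -(cardsID (UA A) (Uall n)) (setIidPr (UA_sub A)) addKn.
rewrite -cD -card_powerset.
have inj : {in [set g : graph n | simple_graph g && ok n g A] &,
             injective (fun g : graph n => D :&: [set p | g p])}.
  move=> g1 g2; rewrite !inE => /andP [s1 o1] /andP [s2 o2] eq.
  apply: simple_ext => // p pU.
  case pA: (p \in UA A); first by rewrite (Hloc _ _ _ _ s1 o1 pA) (Hloc _ _ _ _ s2 o2 pA).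
  have pD : p \in D by rewrite in_setD pA pU.
  by move/setP/(_ p): eq; rewrite !in_setI pD /= !inE.
rewrite -(card_in_imset inj); apply: subset_leq_card.
by apply/subsetP=> X /imsetP [g _ ->]; rewrite powersetE subsetIl.
Qed.

Lemma bad_total (ok : okT) b
  (Hloc : forall n (g : graph n) A p, simple_graph g -> ok n g A -> p \in UA A -> g p = b)
  n k c : (forall A : {set 'I_n}, #|A| = k -> c <= #|UA A|) ->
  #|[set g : graph n | simple_graph g &&
       [exists A : {set 'I_n}, (#|A| == k) && ok n g A]]| <= 2 ^ n * 2 ^ (#|Uall n| - c).
Proof.
move=> Hc.
have sub : [set g : graph n | simple_graph g &&
       [exists A : {set 'I_n}, (#|A| == k) && ok n g A]] \subset
   \bigcup_(A : {set 'I_n} | #|A| == k) [set g : graph n | simple_graph g && ok n g A].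
  apply/subsetP => g; rewrite inE => /andP [sg /existsP [A /andP [cA oA]]].
  by apply/bigcupP; exists A => //; rewrite inE sg oA.
apply: leq_trans (subset_leq_card sub) _; apply: leq_trans (my_card_big_setU _ _ _) _.
apply: (@leq_trans (\sum_(A : {set 'I_n} | #|A| == k) 2 ^ (#|Uall n| - c))).
  apply: leq_sum => A /eqP cA; apply: leq_trans (bad_A Hloc A) _.
  by apply: leq_pexp2l => //; have := Hc A cA; lia.
apply: (@leq_trans (\sum_(A : {set 'I_n}) 2 ^ (#|Uall n| - c))).
  by rewrite [X in _ <= X](bigID (fun A : {set 'I_n} => #|A| == k)) /= leq_addr.
by rewrite sum_nat_const card_sets.
Qed.

Definition good (ok : okT) n k (g : graph n) :=
  simple_graph g && ~~ [exists A : {set 'I_n}, (#|A| == k) && ok n g A].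

Lemma cnt_big (ok : okT)
  (Hher : forall n (g : graph n) (A B : {set 'I_n}), B \subset A -> ok n g A -> ok n g B)
  n k (g : graph n) i : good ok k g -> k <= i -> cnt ok g i = 0.
Proof.
move=> /andP [_ H] ki; apply/eqP; rewrite cards_eq0; apply/eqP/setP => A; rewrite !inE.
apply/negbTE/negP => /andP [/eqP cA oA].
have [B sB cB] : exists2 B : {set 'I_n}, B \subset A & #|B| = k by apply: sub_card; lia.
by apply: (negP H); apply/existsP; exists B; rewrite cB eqxx (Hher _ _ _ _ sB oA).
Qed.

Lemma cnt_le (ok : okT) n (g : graph n) i : cnt ok g i <= 2 ^ n.
Proof. by rewrite /cnt; apply: leq_trans (max_card _) _; rewrite card_sets. Qed.

Definition cvec (ok : okT) n k (g : graph n) : {ffun 'I_k -> 'I_(2 ^ n).+1} :=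
  [ffun i : 'I_k => inord (cnt ok g i)].

Lemma cvec_P (ok : okT)
  (Hher : forall n (g : graph n) (A B : {set 'I_n}), B \subset A -> ok n g A -> ok n g B)
  n k (g1 g2 : graph n) : good ok k g1 -> good ok k g2 ->
  cvec ok k g1 = cvec ok k g2 -> Pok ok g1 = Pok ok g2.
Proof.
move=> G1 G2 eq.
have E : forall i, cnt ok g1 i = cnt ok g2 i.
  move=> i; have [lt|ge] := ltnP i k; last by rewrite !(cnt_big Hher _ ge).
  have := congr1 (fun f : {ffun 'I_k -> 'I_(2 ^ n).+1} => val (f (Ordinal lt))) eq.
  by rewrite /= !ffunE /= !inordK // ltnS cnt_le.
by rewrite /Pok; congr (_ + _)%R; apply: eq_bigr => i _; rewrite E.
Qed.

Definition UG (ok : okT) n k : {set {set graph n}} :=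
  [set C in unique_classes (Pok ok) n |
     [exists g in C, good ok k g && `[< P_unique (Pok ok) g >]]].

Arguments UG ok n k : clear implicits.

Definition phi (ok : okT) n k (C : {set graph n}) : {ffun 'I_k -> 'I_(2 ^ n).+1} :=
  if [pick g in C | good ok k g && `[< P_unique (Pok ok) g >]] is Some g
  then cvec ok k g else [ffun => ord0].

Lemma pickU (ok : okT) n k (C : {set graph n}) : C \in UG ok n k ->
  exists g, [/\ g \in C, good ok k g, P_unique (Pok ok) g & phi ok k C = cvec ok k g].
Proof.
rewrite inE => /andP [_ /existsP [g0 /andP [g0C /andP [gg0 /asboolP gu0]]]].
rewrite /phi; case: pickP => [g /andP [gC /andP [gg /asboolP gu]] | none].
  by exists g.
by have := none g0; rewrite g0C gg0 /= => /negbT/negP; case; apply/asboolP.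
Qed.

Lemma unique_bound (ok : okT) b
  (Hher : forall n (g : graph n) (A B : {set 'I_n}), B \subset A -> ok n g A -> ok n g B)
  (Hloc : forall n (g : graph n) A p, simple_graph g -> ok n g A -> p \in UA A -> g p = b)
  n k c : (forall A : {set 'I_n}, #|A| = k -> c <= #|UA A|) ->
  #|unique_classes (Pok ok) n| <= (2 ^ n).+1 ^ k + 2 ^ n * 2 ^ (#|Uall n| - c).
Proof.
move=> Hc.
set Bad := [set g : graph n | simple_graph g &&
       [exists A : {set 'I_n}, (#|A| == k) && ok n g A]].
have sub : unique_classes (Pok ok) n \subset UG ok n k :|: (@iso_class n @: Bad).
  apply/subsetP => C CU; have := CU; rewrite inE => /andP [Ccl /asboolP [g [gC gU]]].
  have [sg Ceq] := class_mem Ccl gC.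
  case gg: (good ok k g).
    rewrite in_setU; apply/orP; left; rewrite inE CU /=; apply/existsP; exists g.
    by rewrite gC gg /=; apply/asboolP.
  rewrite in_setU; apply/orP; right; apply/imsetP; exists g => //.
  by rewrite inE sg /=; move: gg; rewrite /good sg /= => /negbFE.
apply: leq_trans (subset_leq_card sub) _; apply: leq_trans (leq_card_setU _ _) _.
apply: leq_add.
  have inj : {in UG ok n k &, injective (@phi ok n k)}.
    move=> C1 C2 /[dup] C1U /pickU [g1 [g1C gg1 gu1 ->]] /[dup] C2U /pickU [g2 [g2C gg2 gu2 ->]] eq.
    have eP := cvec_P Hher gg1 gg2 eq.
    have C1cl : C1 \in graph_classes n by move: C1U; rewrite !inE => /andP [/andP []].
    have C2cl : C2 \in graph_classes n by move: C2U; rewrite !inE => /andP [/andP []].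
    have [_ ->] := class_mem C1cl g1C; have [s2 ->] := class_mem C2cl g2C.
    apply: iso_class_eq; have [//|nI] := pselect (iso g1 g2).
    by exfalso; apply: (gu1 n g2).
  rewrite -(card_in_imset inj); apply: leq_trans (max_card _) _.
  by rewrite card_ffun !card_ord.
apply: leq_trans (leq_imset_card _ _) _.
exact: bad_total Hloc _ _ _ Hc.
Qed.

Lemma key_bound (ok : okT) b
  (Hher : forall n (g : graph n) (A B : {set 'I_n}), B \subset A -> ok n g A -> ok n g B)
  (Hloc : forall n (g : graph n) A p, simple_graph g -> ok n g A -> p \in UA A -> g p = b)
  n : 1024 <= n -> n.+1 * #|unique_classes (Pok ok) n| <= #|graph_classes n|.
Proof.
move=> hn.
have hu : n * n <= 2 * #|Uall n| + n.
  by have := UA_card [set: 'I_n]; rewrite cardsT card_ord.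
have [H1 H2] := arith hn hu erefl erefl.
set k := n %/ 4 in H1 H2; set c := (k * k - k) %/ 2 in H1 H2.
have Hc : forall A : {set 'I_n}, #|A| = k -> c <= #|UA A|.
  move=> A cA; have := UA_card A; rewrite cA /c; clearbody k; lia.
have U := unique_bound Hher Hloc Hc.
rewrite -(@leq_pmul2l n`!) ?fact_gt0 //.
apply: leq_trans (simple_le_classes n).
apply: leq_trans (simple_lb n).
apply: leq_trans H1.
by rewrite mulnCA; apply: leq_mul => //; apply: leq_mul.
Qed.

Section RealPart.
Import Order.TTheory GRing.Theory Num.Theory numFieldNormedType.Exports.

Lemma wd_generic (R : realType) (ok : okT) b
  (Hher : forall n (g : graph n) (A B : {set 'I_n}), B \subset A -> ok n g A -> ok n g B)
  (Hloc : forall n (g : graph n) A p, simple_graph g -> ok n g A -> p \in UA A -> g p = b) :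
  weakly_distinguishing R (Pok ok).
Proof.
rewrite /weakly_distinguishing.
apply: (@squeeze_cvgr _ _ _ _ (fun=> 0%R) (@harmonic R)); last first.
- exact: cvg_harmonic.
- exact: cvg_cst.
near=> n.
have hn : (1024 <= n)%N by near: n; exists 1024%N.
have K := key_bound Hher Hloc hn.
apply/andP; split; first by rewrite divr_ge0.
rewrite /harmonic /=.
have [->|cpos] := posnP #|graph_classes n|.
  by rewrite invr0 mulr0 invr_ge0.
rewrite ler_pdivrMr ?ltr0n // mulrC ler_pdivlMr ?ltr0n // -natrM ler_nat.
by rewrite mulnC.
Unshelve. all: by end_near.
Qed.

End RealPart.

Definition ok_ind : okT := fun n g A => [forall x in A, forall y in A, ~~ g (x, y)].
Definition ok_cl : okT :=
  fun n g A => [forall x in A, forall y in A, (x != y) ==> g (x, y)].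

Lemma her_ind n (g : graph n) (A B : {set 'I_n}) :
  B \subset A -> ok_ind g A -> ok_ind g B.
Proof.
move=> sBA /forallP H; apply/forallP=> x; apply/implyP=> xB.
move/implyP: (H x) => /(_ (subsetP sBA x xB)) /forallP H2.
apply/forallP=> y; apply/implyP=> yB; exact: (implyP (H2 y) (subsetP sBA y yB)).
Qed.

Lemma her_cl n (g : graph n) (A B : {set 'I_n}) :
  B \subset A -> ok_cl g A -> ok_cl g B.
Proof.
move=> sBA /forallP H; apply/forallP=> x; apply/implyP=> xB.
move/implyP: (H x) => /(_ (subsetP sBA x xB)) /forallP H2.
apply/forallP=> y; apply/implyP=> yB; exact: (implyP (H2 y) (subsetP sBA y yB)).
Qed.

Lemma loc_ind n (g : graph n) A p : simple_graph g -> ok_ind g A -> p \in UA A -> g p = false.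
Proof.
case: p => i j _ /forallP H; rewrite inE /= => /and3P [_ iA jA].
move/implyP: (H i) => /(_ iA) /forallP /(_ j) /implyP /(_ jA).
exact: negbTE.
Qed.

Lemma loc_cl n (g : graph n) A p : simple_graph g -> ok_cl g A -> p \in UA A -> g p = true.
Proof.
case: p => i j _ /forallP H; rewrite inE /= => /and3P [lt iA jA].
move/implyP: (H i) => /(_ iA) /forallP /(_ j) /implyP /(_ jA) /implyP; apply.
by apply/eqP=> eq; rewrite eq ltnn in lt.
Qed.

Theorem theorem2 (R : realType) :
  weakly_distinguishing R Ind /\ weakly_distinguishing R Cl.
Proof.
split.
- have W := @wd_generic R ok_ind false her_ind loc_ind.
  have -> : Ind = Pok ok_ind by [].
  exact: W.
- have W := @wd_generic R ok_cl true her_cl loc_cl.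
  have -> : Cl = Pok ok_cl by [].
  exact: W.
Qed.
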